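(* There is an absolute constant $c>0$ with the following property. Let $q\ge 2$ be a prime power and let $R$ be a finite local ring containing the field $\mathbb{F}_q$ as a subring, with $d=\dim_{\mathbb{F}_q}R$ and $\delta=\dim_{\mathbb{F}_q}(R\setminus R^* )$, where $R^*$ is the set of units of $R$. If $d=2+\delta$, then the chain geometry $\Sigma(\mathbb{F}_q,R)$ contains a blocking set of size at most $c\,q^{d-1}\log q$ (i.e., of size $O(q^{d-1}\log q)$).
   Context: All rings are associative with unit element $1\neq 0$, and subrings share the unit. $R^2$ is regarded as a left $R$-module. The projective line $\mathbb{P}(R)$ is the set of all submodules of $R^2$ of the form $R(a,b)$ where $(a\ b)$ is the first row of some invertible $2\times 2$ matrix over $R$. For a field $K\subseteq R$ (as a subring), $\mathbb{P}(K)$ is embedded in $\mathbb{P}(R)$ via $K(a,b)\mapsto R(a,b)$. The chain geometry $\Sigma(K,R)$ has point set $\mathbb{P}(R)$ and its blocks, called chains, are the sets $\mathbb{P}(K)^g$ with $g\in\mathrm{GL}_2(R)$. A blocking set is a set $B$ of points such that every chain contains at least one element of $B$. *)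

(* Defs.v *)
From HB Require Import structures.
From mathcomp Require Import all_boot all_order all_algebra.
From Stdlib Require Reals.
Set Implicit Arguments. Unset Strict Implicit. Unset Printing Implicit Defensive.
Import GRing.Theory.
Local Open Scope ring_scope.

Section ChainGeometry.
Variables (K : finFieldType) (R : finUnitRingType) (f : {rmorphism K -> R}).

Definition local_ring :=
  [/\ forall x y : R, x \isn't a GRing.unit -> y \isn't a GRing.unit ->
        x + y \isn't a GRing.unit,
      forall x y : R, y \isn't a GRing.unit -> x * y \isn't a GRing.unit
    & forall x y : R, x \isn't a GRing.unit -> x * y \isn't a GRing.unit].

Definition is_Kbasis (S : pred R) (n : nat) (b : n.-tuple R) :=
  [/\ forall i : 'I_n, tnth b i \in S,
      forall x, x \in S -> exists c : {ffun 'I_n -> K},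
          x = \sum_(i < n) f (c i) * tnth b i
    & forall c : {ffun 'I_n -> K},
          \sum_(i < n) f (c i) * tnth b i = 0 -> forall i, c i = 0].

Definition Kdim_is (S : pred R) (n : nat) := exists b : n.-tuple R, is_Kbasis S b.

(* invertible 2x2 matrices over the (possibly noncommutative) ring R *)
Definition invertible2 (g : 'M[R]_2) :=
  exists h : 'M[R]_2, g *m h = 1%:M /\ h *m g = 1%:M.

Definition submod (a b : R) : {set R * R} := [set (r * a, r * b) | r : R].

Definition admissible (a b : R) :=
  exists g : 'M[R]_2, invertible2 g /\ g 0 0 = a /\ g 0 1 = b.

Definition is_point (p : {set R * R}) := exists a b, admissible a b /\ p = submod a b.

Definition act (g : 'M[R]_2) (a b : R) : {set R * R} :=
  submod (a * g 0 0 + b * g 1 0) (a * g 0 1 + b * g 1 1).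

Definition on_chain (g : 'M[R]_2) (p : {set R * R}) :=
  exists x y : K, (x, y) != (0, 0) /\ p = act g (f x) (f y).

Definition blocking_set (B : {set {set R * R}}) :=
  (forall p, p \in B -> is_point p) /\
  (forall g : 'M[R]_2, invertible2 g -> exists p, p \in B /\ on_chain g p).

End ChainGeometry.

(* Main.v *)
Require Import Defs.
From HB Require Import structures.
From mathcomp Require Import all_boot all_order all_algebra.
From Stdlib Require Reals.
From mathcomp Require Import zify.
From Stdlib Require Import Lra Lia Psatz.

Module Work.
Set Implicit Arguments. Unset Strict Implicit. Unset Printing Implicit Defensive.
Import GRing.Theory.
Lemma disjP' (T : finType) (A B : {set T}) :
  reflect (forall y, y \in A -> y \in B -> False) [disjoint A & B].
Proof.
rewrite disjoint_subset; apply: (iffP subsetP) => [H y yA yB | H y yA].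
  by have := H y yA; rewrite inE yB.
by rewrite inE; apply/negP; exact: H.
Qed.

Section Greedy.
Variables (T I : finType) (F : I -> {set T}) (V : {set T}) (k q : nat).
Hypothesis Vpos : 0 < #|V|.
Hypothesis kq : #|V| <= k * q.
Hypothesis q1 : 0 < q.

Definition good (J : {set I}) := forall i, i \in J -> F i \subset V /\ k <= #|F i|.

Lemma greedy_step (J : {set I}) (x0 : T) : good J ->
  exists x, #|J| * k <= #|[set i in J | x \in F i]| * #|V|.
Proof.
move=> gJ.
pose c x := #|[set i in J | x \in F i]|.
have e1 : forall x, c x = \sum_(i in J) (x \in F i : nat).
  move=> x; rewrite /c -sum1_card big_mkcond /= [RHS]big_mkcond /=.
  by apply: eq_bigr => i _; rewrite inE; case: (i \in J); case: (x \in F i).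
have e2 : \sum_(x in V) c x = \sum_(i in J) #|F i|.
  rewrite (eq_bigr _ (fun x _ => e1 x)) exchange_big /=.
  apply: eq_bigr => i iJ; have [sFV _] := gJ i iJ.
  rewrite -sum1_card big_mkcond /= [RHS]big_mkcond /=.
  apply: eq_bigr => x _.
  case xF: (x \in F i); last by case: (x \in V).
  by rewrite (subsetP sFV x xF).
have e3 : #|J| * k <= \sum_(x in V) c x.
  rewrite e2 -sum_nat_const; apply: leq_sum => i iJ; by case: (gJ i iJ).
pose xm := [arg max_(x > x0) c x].
exists xm.
rewrite /xm; case: arg_maxnP => // y _ Hy.
apply: (leq_trans e3); rewrite mulnC -sum_nat_const; apply: leq_sum => x _; exact: Hy.
Qed.

Lemma greedy_iter n : forall J : {set I}, good J ->
  exists S : {set T}, #|S| <= n /\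
    #|[set i in J | [disjoint F i & S]]| * q ^ n <= #|J| * (q.-1) ^ n.
Proof.
have [x0 _|T0] := pickP T; last first.
  by have := leq_trans Vpos (max_card V); rewrite (eq_card0 T0).
elim: n => [|n IH] J gJ.
  exists set0; rewrite cards0 !expn0 !muln1; split => //.
  by apply: subset_leq_card; apply/subsetP => i; rewrite inE => /andP[].
have [x Hx] := greedy_step x0 gJ.
pose J' := [set i in J | x \notin F i].
have gJ' : good J'. by move=> i; rewrite inE => /andP[/gJ].
have [S' [cS' HS']] := IH J' gJ'.
exists (x |: S'); split.
  by rewrite cardsU1 -add1n leq_add // leq_b1.
have sub : [set i in J | [disjoint F i & x |: S']] \subset [set i in J' | [disjoint F i & S']].
  apply/subsetP => i; rewrite !inE => /andP[iJ dis]; rewrite iJ /=.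
  move/disjP': dis => dis; apply/andP; split.
    by apply/negP => xF; exact: (dis x xF (setU11 _ _)).
  by apply/disjP' => y yF yS; exact: (dis y yF (setU1r _ yS)).
have cJ : #|J'| + #|[set i in J | x \in F i]| = #|J|.
  rewrite -(cardsID [set i | x \in F i] J) addnC; congr (_ + _); apply: eq_card => i;
  by rewrite !inE andbC.
have kJ : #|J'| * q <= #|J| * q.-1.
  set c := #|[set i in J | x \in F i]| in Hx cJ.
  have : #|J'| * q * #|V| <= #|J| * q.-1 * #|V|.
    have h1 : #|J'| * #|V| + #|J| * k <= #|J| * #|V| by apply: (leq_trans (leq_add (leqnn _) Hx)); rewrite -mulnDl cJ.
    have h2 : #|J| * #|V| <= #|J| * k * q by rewrite -mulnA leq_mul2l kq orbT.
    nia.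
  by rewrite leq_pmul2r.
rewrite expnS.
apply: (leq_trans (leq_mul (subset_leq_card sub) (leqnn _))).
rewrite mulnCA; apply: (leq_trans (leq_mul (leqnn q) HS')).
have := leq_mul kJ (leqnn (q.-1 ^ n)); rewrite expnS; nia.
Qed.
End Greedy.
Lemma bern a n : a ^ n.+1 + n.+1 * a ^ n <= a.+1 ^ n.+1.
Proof.
elim: n => [|n IH]; first by rewrite expn0 expn1 muln1 addn1.
have H := leq_mul (leqnn a.+1) IH.
rewrite [a.+1 ^ n.+2]expnS; apply: leq_trans H.
rewrite [a ^ n.+2]expnS [a ^ n.+1]expnS; nia.
Qed.

Lemma half_pow q : 0 < q -> q.-1 ^ q * 2 <= q ^ q.
Proof.
case: q => // a _ /=.
have := bern a a; rewrite expnS; nia.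
Qed.

Lemma pow_half q h : 0 < q -> q.-1 ^ (q * h) * 2 ^ h <= q ^ (q * h).
Proof.
move=> q0; case: h => [|h]; first by rewrite !muln0 !expn0.
by rewrite !expnM -expnMn leq_exp2r // half_pow.
Qed.

Local Open Scope ring_scope.
Section Ring.
Variables (K : finFieldType) (R : finUnitRingType) (f : {rmorphism K -> R}).
Hypothesis loc : local_ring R.

Definition Mp (x : R) := x \isn't a GRing.unit.

Lemma M0 : Mp 0. Proof. by rewrite /Mp unitr0. Qed.
Lemma MD x y : Mp x -> Mp y -> Mp (x + y). Proof. by case: loc => H _ _; apply: H. Qed.
Lemma MMl x y : Mp y -> Mp (x * y). Proof. by case: loc => _ H _; apply: H. Qed.
Lemma MMr x y : Mp x -> Mp (x * y). Proof. by case: loc => _ _ H; apply: H. Qed.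
Lemma MN x : Mp x -> Mp (- x). Proof. by move=> h; rewrite -mulN1r; apply: MMl. Qed.
Lemma MB x y : Mp x -> Mp y -> Mp (x - y). Proof. by move=> hx hy; apply: MD => //; apply: MN. Qed.
Lemma M1 : ~~ Mp 1. Proof. by rewrite /Mp negbK unitr1. Qed.
Lemma UM u m : u \is a GRing.unit -> Mp m -> u + m \is a GRing.unit.
Proof.
move=> uU mM; apply/negPn/negP => h.
have : Mp (u + m - m) by apply: MB.
by rewrite addrK /Mp uU.
Qed.
Lemma fU k : k != 0 -> f k \is a GRing.unit.
Proof. by move=> k0; apply: rmorph_unit; rewrite unitfE. Qed.
Lemma fM k : Mp (f k) -> k = 0.
Proof. move=> h; apply/eqP; apply: (contraTT _ h) => k0; rewrite /Mp negbK; exact: fU. Qed.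

Definition rho (x : R) : R := if [pick y | Mp (x - y)] is Some y then y else x.

Lemma rhoE x : Mp (x - rho x).
Proof.
rewrite /rho; case: pickP => [y //|H].
by have := H x; rewrite subrr M0.
Qed.

Lemma rho_eq x y : Mp (x - y) -> rho x = rho y.
Proof.
move=> h; rewrite /rho (@eq_pick _ _ (fun z => Mp (y - z))) //.
  case: pickP => [z //|H].
  by have := H y; rewrite subrr M0.
move=> z /=; apply/idP/idP => hz.
  have -> : y - z = (x - z) - (x - y) by rewrite opprB [X in _ = X]addrC addrA subrK.
  exact: MB.
have -> : x - z = (x - y) + (y - z) by rewrite addrA subrK.
exact: MD.
Qed.

Lemma rho_id x : rho (rho x) = rho x.
Proof. by apply: rho_eq; rewrite -opprB; apply: MN; apply: rhoE. Qed.

Lemma rho_M x y : rho x = rho y -> Mp (x - y).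
Proof.
move=> e; have -> : x - y = (x - rho x) - (y - rho y) by rewrite e opprB addrA subrK.
by apply: MB; apply: rhoE.
Qed.

Definition cls (w : R * R) : option R :=
  if w.1 \is a GRing.unit then Some (rho (w.1^-1 * w.2)) else None.

Lemma cls_congr u v u' v' : Mp (u - u') -> Mp (v - v') -> cls (u, v) = cls (u', v').
Proof.
move=> hu hv; rewrite /cls /=.
have ue : (u \is a GRing.unit) = (u' \is a GRing.unit).
  apply/idP/idP => h.
    have -> : u' = u + - (u - u') by rewrite opprB addrC subrK.
    by apply: UM => //; apply: MN.
  have -> : u = u' + (u - u') by rewrite addrC subrK.
  exact: UM.
rewrite -ue; case: ifP => uU //.
have u'U : u' \is a GRing.unit by rewrite -ue.
congr Some; apply: rho_eq.
have -> : u^-1 * v - u'^-1 * v' = u^-1 * (u' - u) * u'^-1 * v' + u^-1 * (v - v').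
  have e1 : u^-1 * (u' - u) * u'^-1 * v' = u^-1 * v' - u'^-1 * v'.
    by rewrite mulrBr mulVr // mulrBl mulrBl mul1r -(mulrA _ u') (mulrV u'U) mulr1.
  by symmetry; rewrite e1 mulrBr addrC addrA subrK.
apply: MD; last exact: MMl.
by apply: MMr; apply: MMr; apply: MMl; rewrite -opprB; apply: MN.
Qed.

Definition wrow (g : 'M[R]_2) (a b : R) := (a * g 0 0 + b * g 1 0, a * g 0 1 + b * g 1 1).

Lemma lin2 (a b x y z w p r : R) :
  (a * x + b * y) * p + (a * z + b * w) * r = a * (x * p + z * r) + b * (y * p + w * r).
Proof. by rewrite !mulrDl !mulrDr !mulrA addrACA. Qed.

Lemma lin1 (a b a' b' l x y : R) :
  (a' - l * a) * x + (b' - l * b) * y = (a' * x + b' * y) - l * (a * x + b * y).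
Proof. by rewrite !mulrBl mulrDr !mulrA opprD addrACA. Qed.

Lemma lin3 (a b x y x' y' : R) :
  (a * x' + b * y') - (a * x + b * y) = a * (x' - x) + b * (y' - y).
Proof. by rewrite !mulrBr opprD addrACA. Qed.

Lemma o0 : (ord0 : 'I_2) = 0. Proof. exact: val_inj. Qed.
Lemma o1 : (lift ord0 ord0 : 'I_2) = 1. Proof. exact: val_inj. Qed.

Lemma mul2E (A B : 'M[R]_2) i j : (A *m B) i j = A i 0 * B 0 j + A i 1 * B 1 j.
Proof. by rewrite !mxE !big_ord_recl big_ord0 o0 o1 addr0. Qed.

Lemma one2E i j : (1%:M : 'M[R]_2) i j = (i == j)%:R.
Proof. by rewrite mxE. Qed.

Lemma recon g h a b : g *m h = 1%:M ->
  (wrow g a b).1 * h 0 0 + (wrow g a b).2 * h 1 0 = a /\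
  (wrow g a b).1 * h 0 1 + (wrow g a b).2 * h 1 1 = b.
Proof.
move=> gh.
have e : forall i j : 'I_2, g i 0 * h 0 j + g i 1 * h 1 j = (i == j)%:R.
  by move=> i j; rewrite -mul2E gh one2E.
rewrite /wrow /= !lin2 !e /=.
by rewrite !mulr1 !mulr0 addr0 add0r.
Qed.

Lemma wrowB g a b a' b' l :
  wrow g (a' - l * a) (b' - l * b) =
  ((wrow g a' b').1 - l * (wrow g a b).1, (wrow g a' b').2 - l * (wrow g a b).2).
Proof. by rewrite /wrow /= !lin1. Qed.

Lemma reconM g h a b : g *m h = 1%:M ->
  Mp (wrow g a b).1 -> Mp (wrow g a b).2 -> Mp a /\ Mp b.
Proof.
move=> gh h1 h2; have [e1 e2] := recon a b gh.
split; [rewrite -{1}e1 | rewrite -{1}e2]; by apply: MD; apply: MMr.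
Qed.

Lemma cls_lam g h a b a' b' : g *m h = 1%:M ->
  (~~ Mp a || ~~ Mp b) -> (~~ Mp a' || ~~ Mp b') ->
  cls (wrow g a b) = cls (wrow g a' b') ->
  exists l, Mp (a' - l * a) /\ Mp (b' - l * b).
Proof.
move=> gh ab ab' e.
suff [l [h1 h2]] : exists l, Mp ((wrow g a' b').1 - l * (wrow g a b).1) /\
                            Mp ((wrow g a' b').2 - l * (wrow g a b).2).
  exists l; apply: (reconM gh); by rewrite wrowB.
move: e; rewrite /cls.
set u := (wrow g a b).1; set v := (wrow g a b).2.
set u' := (wrow g a' b').1; set v' := (wrow g a' b').2.
case: ifP => uU; case: ifP => u'U // e.
  have e2 : Mp (u'^-1 * v' - u^-1 * v).
    rewrite -opprB; apply: MN; apply: rho_M; by case: e.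
  exists (u' * u^-1); split.
    by rewrite -mulrA mulVr // mulr1 subrr; exact: M0.
  have -> : v' - u' * u^-1 * v = u' * (u'^-1 * v' - u^-1 * v).
    by rewrite mulrBr !mulrA mulrV // mul1r.
  exact: MMl.
have vU : v \is a GRing.unit.
  apply/negPn/negP => vM.
  have [aM bM] := reconM gh (negbT uU) vM.
  by move: ab; rewrite aM bM.
exists (v' * v^-1); split.
  by apply: MB; [exact: (negbT u'U) | apply: MMl; exact: (negbT uU)].
by rewrite -mulrA mulVr // mulr1 subrr; exact: M0.
Qed.

Definition Cg (g : 'M[R]_2) : {set option R} :=
  [set cls (wrow g (f xy.1) (f xy.2)) | xy in [set xy : K * K | xy != (0, 0)]].

Definition pK (o : option K) : K * K := if o is Some t then (1, t) else (0, 1).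

Lemma Cg_card (g h : 'M[R]_2) : g *m h = 1%:M -> (#|K|.+1 <= #|Cg g|)%N.
Proof.
move=> gh.
pose phi o := cls (wrow g (f (pK o).1) (f (pK o).2)).
have phiI : injective phi.
  have un o : ~~ Mp (f (pK o).1) || ~~ Mp (f (pK o).2).
    by case: o => [t|] /=; rewrite rmorph1 M1 ?orbT.
  move=> o o' e; have [l [h1 h2]] := cls_lam gh (un o) (un o') e.
  move: h1 h2; case: o {e} => [t|]; case: o' => [t'|] /=;
    rewrite ?rmorph1 ?rmorph0 ?mulr0 ?mulr1 ?sub0r ?subr0 => h1 h2.
  - congr Some; apply/eqP; rewrite eq_sym -subr_eq0; apply/eqP; apply: fM.
    rewrite rmorphB.
    have -> : f t' - f t = (f t' - l * f t) + (l - 1) * f t.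
      by rewrite mulrBl mul1r addrA subrK.
    apply: MD => //; apply: MMr; rewrite -opprB; exact: MN.
  - have lM : Mp l by rewrite -[l]opprK; exact: MN.
    have : Mp ((1 - l * f t) + l * f t) by apply: MD => //; apply: MMr.
    by rewrite subrK (negbTE M1).
  - by move: h1; rewrite (negbTE M1).
  - by [].
rewrite -{1}(card_option K) -cardsT -(card_imset _ phiI).
apply: subset_leq_card; apply/subsetP => w /imsetP [o _ ->].
apply/imsetP; exists (pK o) => //; rewrite inE.
by case: o => [t|] //=; rewrite xpair_eqE oner_eq0 ?andbF.
Qed.

Lemma Cg_rho g : Cg (map_mx rho g) = Cg g.
Proof.
apply: eq_imset => xy; rewrite /wrow !mxE.
by apply: cls_congr; rewrite lin3; apply: MD; apply: MMl; rewrite -opprB; apply: MN; apply: rhoE.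
Qed.

Definition mx2 (a b c d : R) : 'M[R]_2 :=
  \matrix_(i, j) (if i == 0 then (if j == 0 then a else b) else (if j == 0 then c else d)).

Lemma ord2 (i : 'I_2) : i = 0 \/ i = 1.
Proof. by case: i => [[|[|//]] Hi]; [left|right]; apply: val_inj. Qed.

Lemma inv2 a b c d a' b' c' d' :
  a * a' + b * c' = 1 -> a * b' + b * d' = 0 -> c * a' + d * c' = 0 -> c * b' + d * d' = 1 ->
  mx2 a b c d *m mx2 a' b' c' d' = 1%:M.
Proof.
move=> e1 e2 e3 e4; apply/matrixP => i j; rewrite mul2E one2E !mxE.
by case: (ord2 i) => ->; case: (ord2 j) => ->.
Qed.

Lemma adm1 (y : R) : admissible 1 y.
Proof.
exists (mx2 1 y 0 1); split; last by rewrite !mxE.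
exists (mx2 1 (- y) 0 1); split; apply: inv2;
  by rewrite ?mul1r ?mulr1 ?mul0r ?mulr0 ?addr0 ?add0r ?addNr ?addrN.
Qed.

Lemma adm2 (m : R) : admissible m 1.
Proof.
exists (mx2 m 1 1 0); split; last by rewrite !mxE.
exists (mx2 0 1 1 (- m)); split; apply: inv2;
  by rewrite ?mul1r ?mulr1 ?mul0r ?mulr0 ?addr0 ?add0r ?addNr ?addrN ?mulrN.
Qed.

Lemma submod_scale (l a b : R) : l \is a GRing.unit -> submod (l * a) (l * b) = submod a b.
Proof.
move=> lU; apply/setP => z; apply/imsetP/imsetP => [[r _ ->]|[r _ ->]].
  by exists (r * l) => //; rewrite !mulrA.
by exists (r * l^-1) => //; rewrite !mulrA mulrVK.
Qed.

Definition Mset := [set m : R | Mp m].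

Definition Bset (S : {set option R}) : {set {set R * R}} :=
  [set submod 1 y | y in [set y : R | Some (rho y) \in S]] :|:
  [set submod m 1 | m in [set m : R | Mp m && (None \in S)]].

Lemma B_points (S : {set option R}) p : p \in Bset S -> is_point p.
Proof.
case/setUP => /imsetP [y _ ->].
  by exists 1, y; split => //; exact: adm1.
by exists y, 1; split => //; exact: adm2.
Qed.

Definition Jset := [set g : 'M[R]_2 |
  [forall i, forall j, rho (g i j) == g i j] && (#|K|.+1 <= #|Cg g|)%N].

Lemma B_block (S : {set option R}) : (forall g, g \in Jset -> exists c, c \in Cg g /\ c \in S) ->
  blocking_set f (Bset S).
Proof.
move=> HS; split; first exact: B_points.
move=> g [h [gh hg]].
pose g' := map_mx rho g.
have g'J : g' \in Jset.
  rewrite inE Cg_rho (Cg_card gh) andbT.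
  by apply/forallP => i; apply/forallP => j; rewrite mxE rho_id.
have [c [cC cS]] := HS g' g'J.
rewrite Cg_rho in cC; case/imsetP: cC => xy; rewrite inE => xy0 ce.
exists (act g (f xy.1) (f xy.2)); split; last by exists xy.1, xy.2; split.
have -> : act g (f xy.1) (f xy.2) =
  submod (wrow g (f xy.1) (f xy.2)).1 (wrow g (f xy.1) (f xy.2)).2 by [].
move: ce; rewrite /cls.
set u := (wrow g _ _).1; set v := (wrow g _ _).2.
case: ifP => uU ce.
  apply/setUP; left; apply/imsetP; exists (u^-1 * v); first by rewrite inE -ce.
  by rewrite -(submod_scale 1 (u^-1 * v) uU) mulr1 mulrA mulrV // mul1r.
have vU : v \is a GRing.unit.
  apply/negPn/negP => vM.
  have [h1 h2] := reconM gh (negbT uU) vM.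
  move: xy0; case: xy h1 h2 {u v uU vM ce} => x y /= /fM -> /fM ->.
  by rewrite eqxx.
apply/setUP; right; apply/imsetP; exists (v^-1 * u).
  by rewrite inE -ce cS andbT; apply: MMl; exact: (negbT uU).
by rewrite -(submod_scale (v^-1 * u) 1 vU) mulr1 mulrA mulrV // mul1r.
Qed.

Definition Imr := [set rho x | x in [set: R]].

Lemma card_split : #|[set: R]| = (#|Imr| * #|Mset|)%N.
Proof.
pose phi x := (rho x, x - rho x).
have phiI : injective phi.
  move=> x y [e1 e2]; by rewrite -(subrK (rho x) x) e2 e1 subrK.
rewrite -cardsX -(card_imset _ phiI).
suff -> : [set phi x | x in [set: R]] = setX Imr Mset by [].
apply/eqP; rewrite eqEsubset; apply/andP; split; apply/subsetP.
  move=> _ /imsetP [x _ ->]; rewrite in_setX /= inE.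
  by rewrite rhoE andbT; apply/imsetP; exists x.
move=> [r m]; rewrite in_setX /= inE => /andP [rI mM].
case/imsetP: rI => z _ ->.
apply/imsetP; exists (rho z + m) => //.
have e : rho (rho z + m) = rho z.
  by rewrite -(rho_id z); apply: rho_eq; rewrite rho_id (addrC (rho z) m) addrK.
by rewrite /phi e (addrC (rho z) m) addrK.
Qed.

Lemma B_card (S : {set option R}) : (#|Bset S| <= #|S| * #|Mset| + #|Mset|)%N.
Proof.
apply: leq_trans (leq_card_setU _ _).1 _; apply: leq_add.
  apply: leq_trans (leq_imset_card _ _) _.
  pose A := [set r | Some r \in S].
  pose phi x := (rho x, x - rho x).
  have phiI : injective phi.
    move=> x y [e1 e2]; by rewrite -(subrK (rho x) x) e2 e1 subrK.
  rewrite -(card_imset _ phiI).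
  apply: leq_trans (_ : (#|setX A Mset| <= _)%N).
    apply: subset_leq_card; apply/subsetP => w /imsetP [x]; rewrite inE => xS ->.
    by rewrite !inE xS; exact: rhoE.
  rewrite cardsX leq_mul2r; apply/orP; right.
  have SI : injective (@Some R) by move=> x y [].
  rewrite -(card_imset _ SI); apply: subset_leq_card.
  by apply/subsetP => w /imsetP [r]; rewrite inE => rS ->.
apply: leq_trans (leq_imset_card _ _) _.
by apply: subset_leq_card; apply/subsetP => m; rewrite !inE => /andP[].
Qed.

Lemma J_card : (#|Jset| <= #|Imr| ^ 4)%N.
Proof.
pose e (g : 'M[R]_2) := (g 0 0, g 0 1, g 1 0, g 1 1).
have eI : injective e.
  move=> g g' [h1 h2 h3 h4]; apply/matrixP => i j.
  by case: (ord2 i) => ->; case: (ord2 j) => ->.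
rewrite -(card_imset _ eI).
apply: leq_trans (_ : (#|setX (setX (setX Imr Imr) Imr) Imr| <= _)%N).
  apply: subset_leq_card; apply/subsetP => w /imsetP [g]; rewrite inE => /andP[/forallP H _] ->.
  have G i j : g i j \in Imr.
    by move/forallP: (H i) => /(_ j) /eqP <-; apply/imsetP; exists (g i j).
  by rewrite !inE !G.
by rewrite !cardsX !expnS expn0 muln1 !mulnA.
Qed.

Lemma Kcard (P : pred R) n : Kdim_is f P n ->
  (forall b : n.-tuple R, (forall i, tnth b i \in P) ->
     forall c : {ffun 'I_n -> K}, \sum_(i < n) f (c i) * tnth b i \in P) ->
  #|[set x | x \in P]| = (#|K| ^ n)%N.
Proof.
move=> [b [bin bspan bind]] Hcl.
pose phi (c : {ffun 'I_n -> K}) := \sum_(i < n) f (c i) * tnth b i.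
have phiI : injective phi.
  move=> c1 c2 e; apply/ffunP => i; apply/eqP; rewrite -subr_eq0; apply/eqP.
  transitivity ([ffun i => c1 i - c2 i] i); first by rewrite ffunE.
  apply: bind.
  under eq_bigr => j _ do rewrite ffunE rmorphB mulrBl.
  by rewrite sumrB; move: e; rewrite /phi => ->; rewrite subrr.
have <- : #|{ffun 'I_n -> K}| = (#|K| ^ n)%N by rewrite card_ffun card_ord.
rewrite -cardsT -(card_imset _ phiI).
suff -> : [set x | x \in P] = [set phi x | x in [set: {ffun 'I_n -> K}]] by [].
apply/setP => x; rewrite inE.
apply/idP/imsetP => [xP|[c _ ->]]; last exact: Hcl.
by have [c ->] := bspan x xP; exists c.
Qed.
End Ring.
Lemma expn_pow m n : (m ^ n)%N = Nat.pow m n.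
Proof. by elim: n => // n IH; rewrite expnS IH -multE. Qed.

Lemma natpart (K : finFieldType) (R : finUnitRingType) (f : {rmorphism K -> R})
         (d delta : nat) :
    local_ring R ->
    Kdim_is f (fun _ => true) d ->
    Kdim_is f (fun x : R => x \isn't a GRing.unit) delta ->
    d = (2 + delta)%N ->
    exists B : {set {set R * R}},
      blocking_set f B /\
      (#|B| <= (8 * trunc_log 2 #|K| + 10) * #|K| ^ (d - 1))%N.
Proof.
move=> loc HR HM ed.
set q := #|K|.
have q2 : (1 < q)%N.
  have : #|[set (0 : K); 1]| = 2%N by rewrite cards2 eq_sym oner_eq0.
  move=> <-; exact: max_card.
have cR : #|[set: R]| = (q ^ d)%N.
  rewrite -(Kcard HR) //; apply: eq_card => x; by rewrite !inE.
have cM : #|Mset R| = (q ^ delta)%N.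
  rewrite -(Kcard HM); first by apply: eq_card => x; rewrite !inE.
  move=> b bin c; apply: (big_ind (fun x : R => x \isn't a GRing.unit)).
  - exact: M0.
  - by move=> x y; apply: MD.
  - by move=> i _; apply: MMl; move: (bin i); rewrite unfold_in.
have cI : #|Imr R| = (q ^ 2)%N.
  have := card_split loc; rewrite cR cM ed expnD.
  by move/eqP; rewrite eqn_pmul2r ?expn_gt0 ?(ltnW q2) // => /eqP.
pose V := None |: [set Some r | r in Imr R].
have Vpos : (1 <= #|V|)%N by apply/card_gt0P; exists None; exact: setU11.
have Vle : (#|V| <= q.+1 * q)%N.
  rewrite cardsU1.
  apply: leq_trans (leq_add (leq_b1 _) (leq_imset_card _ _)) _.
  rewrite cI; nia.
have gd : good (Cg f) V q.+1 (Jset f).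
  move=> g; rewrite inE => /andP [_ cg]; split => //.
  apply/subsetP => _ /imsetP [xy _ ->]; rewrite /cls; case: ifP => _.
    by apply/setU1P; right; apply: imset_f; rewrite /Imr; apply: imset_f; exact: in_setT.
  exact: setU11.
set t := trunc_log 2 q.
have [t1 t2] : (2 ^ t <= q /\ q < 2 ^ t.+1)%N.
  by have := trunc_log_bounds (isT : (1 < 2)%N) (ltnW q2); case/andP.
set h := (8 * t.+1 + 1)%N.
have [S [cS rem]] := greedy_iter Vpos Vle (ltnW q2) (q * h) gd.
set rS := [set _ in _ | _] in rem.
have rem0 : #|rS| = 0%N.
  have cJ : (#|Jset f| < 2 ^ h)%N.
    apply: leq_ltn_trans (J_card f) _; rewrite cI.
    have -> : ((q ^ 2) ^ 4 = q ^ 8)%N by rewrite -expnM.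
    have -> : (2 ^ h = (2 ^ t.+1) ^ 8 * 2)%N by rewrite /h expnD expn1 (mulnC 8) expnM.
    have : (q ^ 8 < (2 ^ t.+1) ^ 8)%N by rewrite ltn_exp2r.
    lia.
  have H1 := pow_half h (ltnW q2).
  have H2 : (#|rS| * 2 ^ h * q ^ (q * h) <= #|Jset f| * q ^ (q * h))%N.
    apply: leq_trans (_ : #|Jset f| * q.-1 ^ (q * h) * 2 ^ h <= _)%N.
      by rewrite mulnAC leq_mul2r rem orbT.
    by rewrite -mulnA leq_mul2l H1 orbT.
  rewrite leq_pmul2r ?expn_gt0 ?(ltnW q2) // in H2.
  have : (#|rS| * 2 ^ h < 2 ^ h)%N by apply: leq_ltn_trans H2 cJ.
  case: #|rS| => // n; rewrite mulSn; nia.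
have hit : forall g, g \in Jset f -> exists c, c \in Cg f g /\ c \in S.
  move=> g gJ.
  have : g \notin rS by rewrite (cards0_eq rem0) inE.
  rewrite inE gJ /=; case: (disjP' (Cg f g) S) => // nd _.
  case: (boolP [exists c, (c \in Cg f g) && (c \in S)]).
    by case/existsP => c /andP[??]; exists c.
  move=> ne; exfalso; apply: nd => y yC yS; move/negP: ne; apply.
  by apply/existsP; exists y; rewrite yC yS.
exists (Bset S); split; first exact: B_block.
apply: leq_trans (B_card S) _.
rewrite cM ed.
have -> : (2 + delta - 1 = delta.+1)%N by lia.
rewrite expnS -mulSnr.
apply: leq_trans (_ : (q * h).+1 * q ^ delta <= _)%N.
  by rewrite leq_mul2r ltnS cS orbT.
rewrite mulnA leq_mul2r; apply/orP; right.
rewrite /h; nia.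
Qed.


Lemma q2lem (K : finFieldType) : (1 < #|K|)%N.
Proof.
have : #|[set (0 : K); 1]| = 2%N by rewrite cards2 eq_sym oner_eq0.
move=> <-; exact: max_card.
Qed.
End Work.
Module RP.
From Stdlib Require Import Rbase Rfunctions Rpower.
Local Open Scope R_scope.
Lemma realpart (b q t e : nat) : (2 <= q)%coq_nat -> (1 <= t)%coq_nat ->
  INR 2 ^ t <= INR q -> INR b <= INR (8 * t + 10)%coq_nat * INR q ^ e ->
  INR b <= 36 * INR q ^ e * ln (INR q).
Proof.
move=> q2 t1 tq hb.
have Q0 : 0 <= INR q ^ e by apply: pow_le; apply: pos_INR.
have q0 : 0 < INR q by apply: lt_0_INR; lia.
have T1 : 1 <= INR t by apply: (le_INR 1 t t1).
have L : INR t * ln 2 <= ln (INR q).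
  have h2 : INR 2 = 2 by rewrite /=; lra.
  rewrite -h2 -ln_pow; last by rewrite h2; lra.
  case: (Rle_lt_or_eq_dec _ _ tq) => [lt|->]; last by lra.
  by apply: Rlt_le; apply: ln_increasing => //; apply: pow_lt; rewrite h2; lra.
have L2 := ln_lt_2.
have E : INR (8 * t + 10)%coq_nat = 8 * INR t + 10.
  rewrite plus_INR mult_INR /=; lra.
rewrite E in hb.
have K : 8 * INR t + 10 <= 36 * ln (INR q) by nra.
have : (8 * INR t + 10) * INR q ^ e <= 36 * ln (INR q) * INR q ^ e.
  by apply: Rmult_le_compat_r.
lra.
Qed.
Lemma c36 : 0 < 36. Proof. lra. Qed.
End RP.

Theorem mainTheorem6 :
  exists c : Rdefinitions.R, Rdefinitions.Rlt (Rdefinitions.IZR BinNums.Z0) c /\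
  forall (K : finFieldType) (R : finUnitRingType) (f : {rmorphism K -> R})
         (d delta : nat),
    local_ring R ->
    Kdim_is f (fun _ => true) d ->
    Kdim_is f (fun x : R => x \isn't a GRing.unit) delta ->
    d = (2 + delta)%N ->
    exists B : {set {set R * R}},
      blocking_set f B /\
      Rdefinitions.Rle (Raxioms.INR #|B|)
        (Rdefinitions.Rmult
           (Rdefinitions.Rmult c (Rpow_def.pow (Raxioms.INR #|K|) (d - 1)))
           (Rpower.ln (Raxioms.INR #|K|))).
Proof.
exists (Rdefinitions.IZR (BinNums.Zpos (BinNums.xO (BinNums.xO (BinNums.xI (BinNums.xO (BinNums.xO BinNums.xH))))))); split; first exact: RP.c36.
move=> K R f d delta loc HR HM ed.
have [B [Bb Bc]] := Work.natpart loc HR HM ed.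
exists B; split => //.
set q := #|K| in Bc *.
have q2 : (1 < q)%N := Work.q2lem K.
set t := trunc_log 2 q in Bc.
have [t1 t2] : (2 ^ t <= q /\ q < 2 ^ t.+1)%N.
  by have := trunc_log_bounds (isT : (1 < 2)%N) (ltnW q2); case/andP.
have tge1 : (1 <= t)%N by apply: trunc_log_max.
apply: (@RP.realpart _ _ t).
- by apply/leP.
- by apply/leP.
- rewrite -RIneq.pow_INR -Work.expn_pow; apply: RIneq.le_INR; exact/leP.
- rewrite -RIneq.pow_INR -RIneq.mult_INR -Work.expn_pow; apply: RIneq.le_INR; apply/leP.
  by rewrite multE plusE.
Qed.
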